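(* Let $V\subseteq\mathbb{Z}^2$ be infinite and connected (in the nearest-neighbour lattice $(\mathbb{Z}^2,\mathcal{E}^2)$) with $\mathbb{Z}^2\setminus V$ also infinite and connected, let $E$ be the set of nearest-neighbour edges with both endpoints in $V$, and let $(v_i)_{i\in\mathbb{Z}}$ be the boundary vertex sequence of $V$ described in the context. Then for every $\omega\in[0,\infty)^E$ and every $x,y\in V$, the limit \[ B(x,y):=\lim_{n\to\infty} B_n(x,y),\qquad B_n(x,y)=\tau(x,v_n)-\tau(y,v_n),\] exists (as a real number).
   Context: The dual lattice has vertex set $\mathbb{Z}^2+(1/2,1/2)$ and edge set $\mathcal{E}^2+(1/2,1/2)$; the dual edge $e^*$ is the one bisecting $e\in\mathcal{E}^2$. For $V$ as in the claim there is a doubly infinite dual path $\Gamma=(e_i^* )_{i\in\mathbb{Z}}$ with no vertex self-intersections such that $(V,E)$ is one of the two components of the graph obtained from $(\mathbb{Z}^2,\mathcal{E}^2)$ by deleting the edges $e_i$ dual to the $e_i^*$; fix such a $\Gamma$ and its indexing, and let $v_i$ be the endpoint of $e_i$ lying in $V$ (a vertex may appear as $v_i$ for several $i$). For $\omega=(\omega_e)_{e\in E}\in[0,\infty)^E$, the passage time of a finite path $\gamma$ in $(V,E)$ is $\tau(\gamma)=\sum_{e\in\gamma}\omega_e$, and $\tau(x,y)=\inf\{\tau(\gamma):\gamma \text{ a path in }(V,E)\text{ from }x\text{ to }y\}$. *)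

(* Defs.v *)
From Stdlib Require Import ZArith Reals List.
From Coquelicot Require Import Coquelicot.
Open Scope R_scope.

Definition vertex := (Z * Z)%type.

(* nearest-neighbour adjacency in Z^2 (also used for the dual lattice,
   a dual vertex (a,b) standing for (a+1/2, b+1/2)) *)
Definition adj (u w : vertex) : Prop :=
  (Z.abs (fst u - fst w) + Z.abs (snd u - snd w) = 1)%Z.

Fixpoint walk (A : vertex -> vertex -> Prop) (x : vertex) (l : list vertex)
  (y : vertex) : Prop :=
  match l with
  | nil => x = y
  | w :: l' => A x w /\ walk A w l' y
  end.

Definition infinite_set (S : vertex -> Prop) : Prop :=
  forall l : list vertex, exists x, S x /\ ~ In x l.

Definition lattice_connected (S : vertex -> Prop) : Prop :=
  forall x y, S x -> S y -> exists l, walk (fun a b => adj a b /\ S b) x l y.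

(* The primal edge {u,w} is the one bisected by the dual edge {p,q}
   (dual vertex (a,b) = (a+1/2,b+1/2)): both are edges and their midpoints
   coincide, i.e. u + w = p + q + (1,1). *)
Definition bisects (p q u w : vertex) : Prop :=
  adj p q /\ adj u w /\
  (fst u + fst w = fst p + fst q + 1)%Z /\
  (snd u + snd w = snd p + snd q + 1)%Z.

(* g : Z -> dual vertices is a doubly infinite dual path with no vertex
   self-intersections; its i-th edge e_i^* is {g i, g (i+1)} *)
Definition dual_path (g : Z -> vertex) : Prop :=
  (forall i, adj (g i) (g (i + 1)%Z)) /\
  (forall i j, g i = g j -> i = j).

Definition crossed (g : Z -> vertex) (u w : vertex) : Prop :=
  exists i, bisects (g i) (g (i + 1)%Z) u w.

Definition cut_adj (g : Z -> vertex) (u w : vertex) : Prop :=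
  adj u w /\ ~ crossed g u w.

Definition is_component (A : vertex -> vertex -> Prop) (C : vertex -> Prop) : Prop :=
  (exists x, C x) /\
  (forall x y, C x -> A x y -> C y) /\
  (forall x y, C x -> C y -> exists l, walk A x l y).

Fixpoint ptime (om : vertex -> vertex -> R) (x : vertex) (l : list vertex) : R :=
  match l with
  | nil => 0
  | w :: l' => om x w + ptime om w l'
  end.

Definition adjV (V : vertex -> Prop) (a b : vertex) : Prop :=
  adj a b /\ V a /\ V b.

(* tau(x,y) = inf of passage times of paths in (V,E) from x to y
   (finite whenever V is connected and x,y in V) *)
Definition tau (V : vertex -> Prop) (om : vertex -> vertex -> R)
  (x y : vertex) : R :=
  real (Glb_Rbar (fun t => exists l, V x /\ walk (adjV V) x l y /\ t = ptime om x l)).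

(* Main.v *)
Require Import Defs.
From Stdlib Require Import ZArith Reals List Lia Lra Classical.
From Coquelicot Require Import Coquelicot.

Open Scope R_scope.


Lemma walk_app (A : vertex -> vertex -> Prop) x l1 y l2 z : walk A x l1 y -> walk A y l2 z -> walk A x (l1 ++ l2) z.
Proof. revert x; induction l1 as [|a l1 IH]; simpl; intros x H1 H2.
- subst; auto.
- destruct H1; split; auto. Qed.

Lemma walk_last (A : vertex -> vertex -> Prop) x l y : walk A x l y -> In y (x :: l).
Proof. revert x; induction l as [|a l IH]; simpl; intros x H.
- auto.
- destruct H as [_ H]; apply IH in H; simpl in H; tauto. Qed.

Lemma walk_split (A : vertex -> vertex -> Prop) x l y z : In z (x :: l) -> walk A x l y ->
  exists l1 l2, l = l1 ++ l2 /\ walk A x l1 z /\ walk A z l2 y.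
Proof. revert x; induction l as [|a l IH]; simpl; intros x Hin H.
- destruct Hin as [<-|[]]. exists nil, nil; simpl; auto.
- destruct Hin as [<-|Hin].
  + exists nil, (a :: l); simpl; auto.
  + destruct H as [Ha H]. destruct (IH a Hin H) as (l1 & l2 & E & W1 & W2).
    exists (a :: l1), l2; subst; simpl; auto. Qed.

Lemma walk_rev (A : vertex -> vertex -> Prop) (Asym : forall a b, A a b -> A b a) x l y : walk A x l y ->
  exists l', walk A y l' x /\ forall t, In t (y :: l') -> In t (x :: l).
Proof. revert x; induction l as [|a l IH]; simpl; intros x H.
- subst; exists nil; simpl; split; auto.
- destruct H as [Ha H]. destruct (IH a H) as (k & Wk & Ik).
  exists (k ++ x :: nil); split.
  + apply walk_app with a; simpl; auto.
  + intros t Ht. simpl in Ht. destruct Ht as [<-|Ht].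
    * right; apply Ik; simpl; auto.
    * destruct (in_app_or k (x :: nil) t Ht) as [Hh|Hh].
      -- right; apply Ik; simpl; auto.
      -- simpl in Hh; destruct Hh as [<-|[]]; simpl; auto. Qed.

Lemma walk_mono (A : vertex -> vertex -> Prop) (B : vertex -> vertex -> Prop) (HAB : forall a b, A a b -> B a b) x l y :
  walk A x l y -> walk B x l y.
Proof. revert x; induction l; simpl; intros x H; [auto| destruct H; split; auto]. Qed.

Lemma walk_inv (A B : vertex -> vertex -> Prop) (P : vertex -> Prop)
  (H : forall a b, P a -> A a b -> B a b /\ P b) x l y :
  P x -> walk A x l y -> walk B x l y /\ forall t, In t (x :: l) -> P t.
Proof. revert x; induction l as [|a l IH]; simpl; intros x Px W.
- subst; split; auto. intros t [<-|[]]; auto.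
- destruct W as [Ha W]. destruct (H _ _ Px Ha) as [Hb Pa].
  destruct (IH a Pa W) as [W' I']; split; auto.
  intros t [<-|Ht]; auto. Qed.

Lemma ptime_app om x l1 y l2 A : walk A x l1 y ->
  ptime om x (l1 ++ l2) = ptime om x l1 + ptime om y l2.
Proof. revert x; induction l1 as [|a l1 IH]; simpl; intros x H.
- subst; ring.
- destruct H as [_ H]; rewrite (IH a H); ring. Qed.

Open Scope Z_scope. Open Scope bool_scope.

Definition adjE (p q : vertex) : Prop := adj p q \/ p = q.

Fixpoint steps (x : vertex) (l : list vertex) : list (vertex * vertex) :=
  match l with nil => nil | w :: l' => (x, w) :: steps w l' end.

Definition adjb (p q : vertex) : bool :=
  Z.eqb (Z.abs (fst p - fst q) + Z.abs (snd p - snd q)) 1.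
Definition bisb (p q u w : vertex) : bool :=
  adjb p q && adjb u w && Z.eqb (fst u + fst w) (fst p + fst q + 1)
  && Z.eqb (snd u + snd w) (snd p + snd q + 1).

Lemma bisb_spec p q u w : bisb p q u w = true <-> bisects p q u w.
Proof. unfold bisb, adjb, bisects, adj.
  rewrite !Bool.andb_true_iff, !Z.eqb_eq. tauto. Qed.

Definition xind (d c : vertex * vertex) : Z :=
  if bisb (fst d) (snd d) (fst c) (snd c) then 1 else 0.
Definition sumZ (l : list Z) : Z := fold_right Z.add 0 l.
Definition cnt (D C : list (vertex * vertex)) : Z :=
  sumZ (map (fun d => sumZ (map (xind d) C)) D).

Definition Fv (h : vertex) (e : vertex * vertex) : Z :=
  if (fst (fst e) =? fst (snd e)) && (fst h + 1 <=? fst (fst e))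
     && (Z.min (snd (fst e)) (snd (snd e)) =? snd h) then 1 else 0.
Definition Gv (p q z : vertex) : Z :=
  if (fst p =? fst q) && negb (snd p =? snd q) && (snd z =? Z.max (snd p) (snd q))
     && (fst p + 1 <=? fst z) then 1 else 0.

Lemma adj_cases (p q : vertex) : adj p q ->
  q = (fst p + 1, snd p) \/ q = (fst p - 1, snd p) \/
  q = (fst p, snd p + 1) \/ q = (fst p, snd p - 1).
Proof. destruct p as [a b], q as [c d]; unfold adj; simpl; intro H.
  assert ((c = a + 1 /\ d = b) \/ (c = a - 1 /\ d = b) \/ (c = a /\ d = b + 1)
    \/ (c = a /\ d = b - 1)) as HH by lia.
  destruct HH as [[-> ->]|[[-> ->]|[[-> ->]|[-> ->]]]]; auto. Qed.

Ltac crush :=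
  repeat (match goal with
  | |- context [Z.eqb ?a ?b] => destruct (Z.eqb_spec a b)
  | |- context [Z.leb ?a ?b] => destruct (Z.leb_spec a b)
  end; simpl; try (exfalso; lia)); try reflexivity.

Lemma edge_parity p q u w : adjE p q -> adj u w ->
  Z.even (xind (p, q) (u, w) + Fv p (u, w) + Fv q (u, w) + Gv p q u + Gv p q w) = true.
Proof. intros Hpq Huw.
  destruct Hpq as [Hpq|Hpq];
  [destruct (adj_cases _ _ Hpq) as [ -> | [ -> | [ -> | -> ] ] ]|subst q];
  (destruct (adj_cases _ _ Huw) as [ -> | [ -> | [ -> | -> ] ] ]);
  destruct p as [p1 p2], u as [u1 u2];
  unfold xind, bisb, adjb, Fv, Gv; simpl; crush. Qed.

Lemma sumZ_app l1 l2 : sumZ (l1 ++ l2) = sumZ l1 + sumZ l2.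
Proof. induction l1; simpl; lia. Qed.

Lemma sumZ_add {T} (f g : T -> Z) l :
  sumZ (map (fun e => f e + g e) l) = sumZ (map f l) + sumZ (map g l).
Proof. induction l; simpl; lia. Qed.

Lemma sumZ_even {T} (f : T -> Z) l : (forall e, In e l -> Z.Even (f e)) ->
  Z.Even (sumZ (map f l)).
Proof. induction l as [|a l IH]; simpl; intro H.
- exists 0; lia.
- destruct (H a (or_introl eq_refl)) as [k Hk].
  destruct IH as [m Hm]; [intros; apply H; auto|]. exists (k + m); lia. Qed.

Lemma sumZ_ext {T} (f g : T -> Z) l : (forall e, In e l -> f e = g e) ->
  sumZ (map f l) = sumZ (map g l).
Proof. intro H; f_equal; apply map_ext_in; auto. Qed.

Lemma steps_shift (R : vertex -> vertex -> Prop) (f : vertex -> Z) x l y : walk R x l y ->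
  sumZ (map (fun s => f (fst s)) (steps x l)) + f y =
  f x + sumZ (map (fun s => f (snd s)) (steps x l)).
Proof. revert x; induction l as [|a l IH]; simpl; intros x H.
- subst; lia.
- destruct H as [_ H]; specialize (IH a H); lia. Qed.

Lemma walk_steps (R : vertex -> vertex -> Prop) x l y : walk R x l y ->
  forall s, In s (steps x l) -> R (fst s) (snd s).
Proof. revert x; induction l as [|a l IH]; simpl; intros x H s Hs; [destruct Hs|].
  destruct H as [Ha H]; destruct Hs as [<-|Hs]; simpl; auto. apply (IH a H s Hs). Qed.

Lemma parity x C y D : walk adj x C x -> walk adjE y D y ->
  Z.Even (cnt (steps y D) (steps x C)).
Proof. intros HC HD.
  set (SF h := sumZ (map (Fv h) (steps x C))).
  assert (Hd : forall p q, adjE p q ->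
     Z.Even (sumZ (map (xind (p, q)) (steps x C)) + SF p + SF q)).
  { intros p q Hpq.
    assert (He := sumZ_even (fun e => xind (p, q) e + Fv p e + Fv q e + Gv p q (fst e) + Gv p q (snd e))
                   (steps x C)).
    destruct He as [k Hk].
    { intros [u w] Hin. apply Z.even_spec. apply edge_parity; auto.
      apply (walk_steps _ _ _ _ HC _ Hin). }
    rewrite !sumZ_add in Hk.
    pose proof (steps_shift _ (Gv p q) x C x HC).
    exists (k - sumZ (map (fun s => Gv p q (snd s)) (steps x C))).
    unfold SF. lia. }
  assert (He := sumZ_even (fun d => sumZ (map (xind d) (steps x C)) + SF (fst d) + SF (snd d))
                   (steps y D)).
  destruct He as [k Hk].
  { intros [p q] Hin. apply Hd. apply (walk_steps _ _ _ _ HD _ Hin). }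
  rewrite !sumZ_add in Hk.
  pose proof (steps_shift _ SF y D y HD).
  exists (k - sumZ (map (fun s => SF (snd s)) (steps y D))).
  unfold cnt. lia. Qed.

Open Scope Z_scope. Open Scope bool_scope.

Lemma cnt_appD D1 D2 C : cnt (D1 ++ D2) C = cnt D1 C + cnt D2 C.
Proof. unfold cnt; rewrite map_app, sumZ_app; lia. Qed.

Lemma cnt_appC D C1 C2 : cnt D (C1 ++ C2) = cnt D C1 + cnt D C2.
Proof. unfold cnt. induction D as [|d D IH]; simpl; [lia|].
  rewrite map_app, sumZ_app. lia. Qed.

Lemma cnt_zero D C : (forall d c, In d D -> In c C -> ~ bisects (fst d) (snd d) (fst c) (snd c)) ->
  cnt D C = 0.
Proof. intro H. unfold cnt. induction D as [|d D IH]; simpl; [lia|].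
  rewrite IH; [|intros; apply H; simpl; auto].
  assert (sumZ (map (xind d) C) = 0); [|lia].
  clear IH. assert (H' : forall c, In c C -> ~ bisects (fst d) (snd d) (fst c) (snd c))
    by (intros; apply H; simpl; auto). clear H.
  induction C as [|c C IH]; simpl; [lia|].
  unfold xind at 1. destruct (bisb _ _ _ _) eqn:E.
  - apply bisb_spec in E. exfalso; apply (H' c); simpl; auto.
  - rewrite IH; [lia|]. intros; apply H'; simpl; auto. Qed.

Lemma cnt_single D c : cnt D (c :: nil) = sumZ (map (fun d => xind d c) D).
Proof. unfold cnt; apply sumZ_ext; intros; simpl; lia. Qed.

Lemma steps_app (R : vertex -> vertex -> Prop) x l1 y l2 : walk R x l1 y ->
  steps x (l1 ++ l2) = steps x l1 ++ steps y l2.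
Proof. revert x; induction l1 as [|a l1 IH]; simpl; intros x H; [subst; auto|].
  destruct H as [_ H]; rewrite (IH a H); auto. Qed.

Lemma steps_in x l s : In s (steps x l) -> In (fst s) (x :: l) /\ In (snd s) (x :: l).
Proof. revert x; induction l as [|a l IH]; simpl; intros x H; [destruct H|].
  destruct H as [<-|H]; simpl; auto. apply IH in H; simpl in H; tauto. Qed.

Lemma bis_endpoint p q u w : bisects p q u w -> u = p \/ u = q \/ w = p \/ w = q.
Proof. destruct p as [p1 p2], q as [q1 q2], u as [u1 u2], w as [w1 w2].
  unfold bisects, adj; simpl. intros (H1 & H2 & H3 & H4).
  assert ((u1 = p1 /\ u2 = p2) \/ (u1 = q1 /\ u2 = q2) \/ (w1 = p1 /\ w2 = p2) \/ (w1 = q1 /\ w2 = q2)) by lia.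
  intuition (subst; auto). Qed.

Lemma bis_unique p q p' q' u w : bisects p q u w -> bisects p' q' u w ->
  (p = p' /\ q = q') \/ (p = q' /\ q = p').
Proof. destruct p as [p1 p2], q as [q1 q2], p' as [r1 r2], q' as [s1 s2], u as [u1 u2], w as [w1 w2].
  unfold bisects, adj; simpl. intros (H1 & H2 & H3 & H4) (H5 & H6 & H7 & H8).
  assert ((p1 = r1 /\ p2 = r2 /\ q1 = s1 /\ q2 = s2) \/ (p1 = s1 /\ p2 = s2 /\ q1 = r1 /\ q2 = r2)) by lia.
  intuition (subst; auto). Qed.

Lemma bis_sym1 p q u w : bisects p q u w -> bisects q p u w.
Proof. unfold bisects, adj. lia. Qed.
Lemma bis_sym2 p q u w : bisects p q u w -> bisects p q w u.
Proof. unfold bisects, adj. lia. Qed.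

Definition fpath (f : Z -> vertex) (i : Z) (n : nat) : list vertex :=
  map (fun k => f (i + Z.of_nat k)) (seq 1 n).

Lemma fpath_walk (R : vertex -> vertex -> Prop) f i n : (forall k, R (f k) (f (k + 1))) ->
  walk R (f i) (fpath f i n) (f (i + Z.of_nat n)).
Proof. intro H. induction n as [|n IH].
- simpl. f_equal; lia.
- unfold fpath in *. rewrite seq_S, map_app. apply walk_app with (f (i + Z.of_nat n)); auto.
  cbn [map walk]. replace (i + Z.of_nat (1 + n)) with (i + Z.of_nat n + 1) by lia.
  split; [apply H|f_equal; lia]. Qed.

Lemma fpath_steps f i n s : In s (steps (f i) (fpath f i n)) ->
  exists k, i <= k < i + Z.of_nat n /\ s = (f k, f (k + 1)).
Proof. induction n as [|n IH]; intro Hs; [simpl in Hs; destruct Hs|].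
  unfold fpath in Hs. rewrite seq_S, map_app in Hs.
  rewrite (steps_app (fun _ _ => True) _ _ (f (i + Z.of_nat n))) in Hs.
  2:{ apply (fpath_walk (fun _ _ => True)); auto. }
  apply in_app_or in Hs. destruct Hs as [Hs|Hs].
  - destruct (IH Hs) as (k & Hk & ->). exists k; split; auto; lia.
  - cbn [map steps In] in Hs. destruct Hs as [<-|[]]. exists (i + Z.of_nat n); split; [lia|].
    f_equal; f_equal; lia. Qed.

Lemma fpath_count f i n c k0 :
  (forall k, bisects (f k) (f (k + 1)) (fst c) (snd c) <-> k = k0) ->
  sumZ (map (fun d => xind d c) (steps (f i) (fpath f i n))) =
  if (i <=? k0) && (k0 <? i + Z.of_nat n) then 1 else 0.
Proof. intro H. induction n as [|n IH].
- simpl. destruct (Z.leb_spec i k0), (Z.ltb_spec k0 (i + 0)); simpl; auto; lia.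
- unfold fpath in *. rewrite seq_S, map_app.
  rewrite (steps_app (fun _ _ => True) _ _ (f (i + Z.of_nat n))).
  2:{ apply (fpath_walk (fun _ _ => True)); auto. }
  rewrite map_app, sumZ_app, IH. cbn [map steps sumZ fold_right].
  replace (i + Z.of_nat (1 + n)) with (i + Z.of_nat n + 1) by lia.
  unfold xind; cbn [fst snd]. rewrite Nat2Z.inj_succ. destruct (bisb _ _ _ _) eqn:E.
  + apply bisb_spec, H in E.
    repeat match goal with |- context [Z.leb ?a ?b] => destruct (Z.leb_spec a b)
      | |- context [Z.ltb ?a ?b] => destruct (Z.ltb_spec a b) end; simpl; lia.
  + assert (k0 <> i + Z.of_nat n).
    { intro Hk; rewrite Hk in H. assert (bisb (f (i + Z.of_nat n)) (f (i + Z.of_nat n + 1)) (fst c) (snd c) = true)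
        by (apply bisb_spec, H; auto). congruence. }
    repeat match goal with |- context [Z.leb ?a ?b] => destruct (Z.leb_spec a b)
      | |- context [Z.ltb ?a ?b] => destruct (Z.ltb_spec a b) end; simpl; lia. Qed.

Open Scope Z_scope. Open Scope bool_scope.

Definition far (r : Z) (z : vertex) : Prop := r < Z.abs (fst z) \/ r < Z.abs (snd z).

Lemma far_exists (h : nat -> vertex) (Hinj : forall m m', h m = h m' -> m = m') r :
  exists m, far r (h m).
Proof. apply NNPP; intro Hn.
  assert (Hb : forall m, Z.abs (fst (h m)) <= r /\ Z.abs (snd (h m)) <= r).
  { intro m. destruct (Z.le_gt_cases (Z.abs (fst (h m))) r), (Z.le_gt_cases (Z.abs (snd (h m))) r);
    auto; exfalso; apply Hn; exists m; unfold far; auto. }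
  assert (r0 : 0 <= r) by (destruct (Hb 0%nat); lia).
  set (K := Z.to_nat (2 * r + 1)).
  set (rng := map (fun m => - r + Z.of_nat m) (seq 0 K)).
  assert (Hr : forall z, Z.abs z <= r -> In z rng).
  { intros z Hz. unfold rng. apply in_map_iff. exists (Z.to_nat (z + r)). split; [lia|].
    apply in_seq; unfold K; lia. }
  set (L := map h (seq 0 (K * K + 1))).
  assert (ND : NoDup L).
  { unfold L; apply NoDup_map_NoDup_ForallPairs; [|apply seq_NoDup].
    intros a b _ _; apply Hinj. }
  assert (IN : incl L (list_prod rng rng)).
  { intros z Hz. unfold L in Hz. apply in_map_iff in Hz. destruct Hz as (m & <- & _).
    destruct (h m) as [a b] eqn:E. apply in_prod; apply Hr; destruct (Hb m); rewrite E in *; auto. }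
  pose proof (NoDup_incl_length ND IN) as H. assert (H2 : (length L <= length rng * length rng)%nat) by (rewrite <- length_prod; exact H). clear H; rename H2 into H.
  unfold L, rng in H. rewrite !length_map, !length_seq in H. lia. Qed.

Definition stepto (a b : vertex) : vertex :=
  if fst a <? fst b then (fst a + 1, snd a) else if fst b <? fst a then (fst a - 1, snd a)
  else if snd a <? snd b then (fst a, snd a + 1) else if snd b <? snd a then (fst a, snd a - 1)
  else a.

Fixpoint mpath (n : nat) (a b : vertex) : list vertex :=
  match n with O => nil | S n => stepto a b :: mpath n (stepto a b) b end.

Definition dist (a b : vertex) : Z := Z.abs (fst a - fst b) + Z.abs (snd a - snd b).
Definition inbox (a b z : vertex) : Prop :=
  Z.min (fst a) (fst b) <= fst z <= Z.max (fst a) (fst b) /\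
  Z.min (snd a) (snd b) <= snd z <= Z.max (snd a) (snd b).

Lemma stepto_props a b : adjE a (stepto a b) /\ inbox a b (stepto a b) /\
  (a = b -> stepto a b = a) /\ (a <> b -> dist (stepto a b) b = dist a b - 1) /\
  (forall z, inbox (stepto a b) b z -> inbox a b z).
Proof. destruct a as [a1 a2], b as [b1 b2]. unfold stepto, adjE, adj, inbox, dist; simpl.
  repeat match goal with |- context [Z.ltb ?a ?b] => destruct (Z.ltb_spec a b) end; simpl;
  (split; [try (left; lia); right; f_equal; lia|]);
  (split; [lia|]); (split; [intro E; try (injection E; lia); auto|]);
  (split; [intro E; try lia; try (exfalso; apply E; f_equal; lia)|]); intros; lia. Qed.

Lemma mpath_walk n a b : (Z.to_nat (dist a b) <= n)%nat ->
  walk adjE a (mpath n a b) b /\ forall z, In z (mpath n a b) -> inbox a b z.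
Proof. revert a; induction n as [|n IH]; intros a Hn.
- simpl. split; [|intros _ []]. destruct a as [a1 a2], b as [b1 b2]; unfold dist in Hn; simpl in Hn.
  f_equal; lia.
- destruct (stepto_props a b) as (H1 & H2 & H3 & H4 & H5).
  assert (Hn' : (Z.to_nat (dist (stepto a b) b) <= n)%nat).
  { destruct (classic (a = b)) as [E|E].
    - rewrite (H3 E). subst. unfold dist; lia.
    - rewrite (H4 E). lia. }
  destruct (IH _ Hn') as [W I]. simpl; split; [split; auto|].
  intros z [<-|Hz]; auto. Qed.

Lemma leg a b : exists l, walk adjE a l b /\ forall z, In z l -> inbox a b z.
Proof. exists (mpath (Z.to_nat (dist a b)) a b). apply mpath_walk; lia. Qed.

Lemma adjE_sym a b : adjE a b -> adjE b a.
Proof. unfold adjE, adj; intros [H|H]; [left; lia|right; auto]. Qed.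

Lemma half_conn r p : far r p ->
  exists l, walk adjE p l (r + 1, r + 1) /\ forall z, In z l -> far r z.
Proof. intro Hp. set (M := r + 1). destruct Hp as [Hp|Hp].
- destruct (leg p (fst p, M)) as (l1 & W1 & I1).
  destruct (leg (fst p, M) (M, M)) as (l2 & W2 & I2).
  exists (l1 ++ l2); split; [eapply walk_app; eauto|].
  intros z Hz; apply in_app_or in Hz; destruct Hz as [Hz|Hz].
  + apply I1 in Hz; unfold inbox, far in *; simpl in *; left; lia.
  + apply I2 in Hz; unfold inbox, far in *; simpl in *; right; unfold M in *; lia.
- destruct (leg p (M, snd p)) as (l1 & W1 & I1).
  destruct (leg (M, snd p) (M, M)) as (l2 & W2 & I2).
  exists (l1 ++ l2); split; [eapply walk_app; eauto|].
  intros z Hz; apply in_app_or in Hz; destruct Hz as [Hz|Hz].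
  + apply I1 in Hz; unfold inbox, far in *; simpl in *; right; lia.
  + apply I2 in Hz; unfold inbox, far in *; simpl in *; left; unfold M in *; lia. Qed.

Lemma connector r p q : far r p -> far r q ->
  exists l, walk adjE p l q /\ forall z, In z l -> far r z.
Proof. intros Hp Hq.
  destruct (half_conn r p Hp) as (l1 & W1 & I1).
  destruct (half_conn r q Hq) as (l2 & W2 & I2).
  destruct (walk_rev adjE adjE_sym _ _ _ W2) as (l3 & W3 & I3).
  exists (l1 ++ l3); split; [eapply walk_app; eauto|].
  intros z Hz; apply in_app_or in Hz; destruct Hz as [Hz|Hz]; auto.
  destruct (I3 z (or_intror Hz)) as [<-|Hz']; auto. Qed.

Open Scope Z_scope. Open Scope bool_scope.

Definition bnd (l : list vertex) : Z :=
  fold_right (fun z m => Z.max m (Z.max (Z.abs (fst z)) (Z.abs (snd z)))) 0 l.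

Lemma bnd_in z l : In z l -> Z.abs (fst z) <= bnd l /\ Z.abs (snd z) <= bnd l.
Proof. induction l as [|a l IH]; simpl; intros H; [destruct H|].
  destruct H as [<-|H]; [lia|]. destruct (IH H); lia. Qed.

Lemma bis_inj g (Hg : dual_path g) i j u w :
  bisects (g i) (g (i + 1)) u w -> bisects (g j) (g (j + 1)) u w -> i = j.
Proof. destruct Hg as [_ Hi]. intros H1 H2.
  destruct (bis_unique _ _ _ _ _ _ H1 H2) as [[E1 E2]|[E1 E2]].
  - apply Hi in E1; auto.
  - apply Hi in E1; apply Hi in E2; lia. Qed.

Lemma walk_adj_of (R : vertex -> vertex -> Prop) (H : forall a b, R a b -> adj a b) x l y :
  walk R x l y -> walk adj x l y.
Proof. apply walk_mono; auto. Qed.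

Lemma noncross g (Hg : dual_path g) u R w j :
  walk (cut_adj g) u R w -> bisects (g j) (g (j + 1)) u w -> False.
Proof. intros HR Hb.
  set (r := bnd (u :: R)).
  destruct (far_exists (fun m => g (j - Z.of_nat m))) with (r := r) as [m1 Hm1].
  { intros m m' E. apply (proj2 Hg) in E. lia. }
  destruct (far_exists (fun m => g (j + 1 + Z.of_nat m))) with (r := r) as [m2 Hm2].
  { intros m m' E. apply (proj2 Hg) in E. lia. }
  set (j' := j - Z.of_nat m1) in *. set (k' := j + 1 + Z.of_nat m2) in *.
  set (n := Z.to_nat (k' - j')).
  assert (Wg : walk adj (g j') (fpath g j' n) (g k')).
  { replace (g k') with (g (j' + Z.of_nat n)) by (f_equal; unfold n; lia).
    apply fpath_walk. apply (proj1 Hg). }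
  destruct (connector r (g k') (g j') Hm2 Hm1) as (l & Wl & Il).
  assert (WD : walk adjE (g j') (fpath g j' n ++ l) (g j')).
  { apply walk_app with (g k'); auto. apply (walk_mono adj); auto. unfold adjE; auto. }
  assert (WR : walk adj u R w) by (apply (walk_adj_of (cut_adj g)); [intros a b []; auto|auto]).
  assert (WC : walk adj u (R ++ u :: nil) u).
  { apply walk_app with w; auto. simpl; split; auto. destruct Hb as (_ & Huw & _).
    unfold adj in *; lia. }
  pose proof (parity _ _ _ _ WC WD) as Hpar.
  rewrite (steps_app adj _ _ (g k') _ Wg) in Hpar.
  rewrite (steps_app adj _ _ w _ WR) in Hpar. simpl steps in Hpar.
  rewrite !cnt_appD, !cnt_appC in Hpar.
  assert (Z1 : cnt (steps (g j') (fpath g j' n)) (steps u R) = 0).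
  { apply cnt_zero. intros d c Hd Hc Hbis.
    destruct (fpath_steps _ _ _ _ Hd) as (k & _ & ->).
    destruct (walk_steps _ _ _ _ HR _ Hc) as [_ Hnc]. apply Hnc. exists k; auto. }
  assert (Z2 : cnt (steps (g j') (fpath g j' n)) ((w, u) :: nil) = 1).
  { rewrite cnt_single. rewrite (fpath_count g j' n (w, u) j).
    - destruct (Z.leb_spec j' j), (Z.ltb_spec j (j' + Z.of_nat n)); simpl; unfold n in *; lia.
    - intro k; simpl; split.
      + intro Hk. apply (bis_inj g Hg k j w u Hk). apply bis_sym2; auto.
      + intros ->. apply bis_sym2; auto. }
  assert (Hfar : forall z, In z (g k' :: l) -> far r z) by (intros z [<-|Hz]; auto).
  assert (Hbd : forall z, In z (u :: R) -> ~ far r z).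
  { intros z Hz Hf. destruct (bnd_in z _ Hz). unfold far in Hf. unfold r in *. lia. }
  assert (Z3 : cnt (steps (g k') l) (steps u R) = 0).
  { apply cnt_zero. intros d c Hd Hc Hbis. apply steps_in in Hd. apply steps_in in Hc.
    destruct Hd as [Hd1 Hd2], Hc as [Hc1 Hc2].
    destruct (bis_endpoint _ _ _ _ Hbis) as [E|[E|[E|E]]];
      [apply (Hbd (fst d))|apply (Hbd (snd d))|apply (Hbd (fst d))|apply (Hbd (snd d))];
      first [rewrite <- E; assumption | apply Hfar; assumption]. }
  assert (Z4 : cnt (steps (g k') l) ((w, u) :: nil) = 0).
  { apply cnt_zero. intros d c Hd Hc Hbis. apply steps_in in Hd. destruct Hd as [Hd1 Hd2].
    destruct Hc as [<-|[]]. simpl in Hbis.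
    assert (Hw : In w (u :: R)) by (apply (walk_last _ _ _ _ HR)).
    destruct (bis_endpoint _ _ _ _ Hbis) as [E|[E|[E|E]]];
      [apply (Hbd (fst d))|apply (Hbd (snd d))|apply (Hbd (fst d))|apply (Hbd (snd d))];
      first [apply Hfar; assumption | rewrite <- E; assumption | rewrite <- E; simpl; auto]. }
  rewrite Z1, Z2, Z3, Z4 in Hpar. destruct Hpar as [x Hx]; lia. Qed.

Open Scope Z_scope. Open Scope bool_scope.

Lemma sides (V : vertex -> Prop) g (Hg : dual_path g)
  (HVcomp : is_component (cut_adj g) V)
  (HCcomp : is_component (cut_adj g) (fun x => ~ V x)) i a b :
  bisects (g i) (g (i + 1)) a b -> (V a -> ~ V b) /\ (~ V a -> V b).
Proof. intro Hb. split.
- intros Ha Hb'. destruct HVcomp as (_ & _ & H). destruct (H a b Ha Hb') as [R HR].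
  apply (noncross g Hg a R b i HR Hb).
- intros Ha. apply NNPP; intro Hb'. destruct HCcomp as (_ & _ & H).
  destruct (H a b Ha Hb') as [R HR]. apply (noncross g Hg a R b i HR Hb). Qed.

Lemma corner p q u w : bisects p q u w ->
  0 <= fst u - fst p <= 1 /\ 0 <= snd u - snd p <= 1.
Proof. destruct p as [p1 p2], q as [q1 q2], u as [u1 u2], w as [w1 w2].
  unfold bisects, adj; simpl; lia. Qed.

Definition link (v g : vertex) : list vertex := (fst g, snd v) :: g :: nil.

Lemma link_ok v g : 0 <= fst v - fst g <= 1 -> 0 <= snd v - snd g <= 1 ->
  walk adjE v (link v g) g /\ walk adjE g (link g v) v /\
  (forall s a b, In s (steps v (link v g) ++ steps g (link g v)) ->
    bisects (fst s) (snd s) a b -> a = v \/ b = v).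
Proof. destruct v as [v1 v2], g as [g1 g2]; simpl. intros H1 H2.
  split; [|split].
  - unfold adjE, adj; simpl. split; [|split; auto].
    + destruct (Z.eq_dec v1 g1); [right; f_equal; auto|left; simpl; lia].
    + destruct (Z.eq_dec v2 g2); [right; f_equal; auto|left; simpl; lia].
  - unfold adjE, adj; simpl. split; [|split; auto].
    + destruct (Z.eq_dec v1 g1); [right; f_equal; auto|left; simpl; lia].
    + destruct (Z.eq_dec v2 g2); [right; f_equal; auto|left; simpl; lia].
  - intros s [a1 a2] [b1 b2] Hs Hb.
    assert (HH : (a1 = v1 /\ a2 = v2) \/ (b1 = v1 /\ b2 = v2)).
    { destruct Hs as [<-|[<-|[<-|[<-|[]]]]]; unfold bisects, adj in Hb; simpl in Hb; lia. }
    destruct HH as [[-> ->]|[-> ->]]; auto. Qed.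

Lemma crossing_L (V : vertex -> Prop) g (Hg : dual_path g)
  (HVcomp : is_component (cut_adj g) V)
  (HCcomp : is_component (cut_adj g) (fun x => ~ V x))
  (HCconn : lattice_connected (fun x => ~ V x))
  (v : Z -> vertex)
  (Hv : forall i, V (v i) /\ exists w, bisects (g i) (g (i + 1)%Z) (v i) w)
  a b c d P Q : a < c < b -> b < d ->
  walk (adjV V) (v a) P (v b) -> walk (adjV V) (v c) Q (v d) ->
  exists z, In z (v a :: P) /\ In z (v c :: Q).
Proof. intros Hac Hbd WP WQ. apply NNPP; intro Hdis.
  assert (Hd : forall z, In z (v a :: P) -> In z (v c :: Q) -> False)
    by (intros z H1 H2; apply Hdis; exists z; auto). clear Hdis.
  destruct (Hv a) as [Va [wa Ha]]. destruct (Hv b) as [Vb [wb Hb]].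
  destruct (Hv c) as [Vc [wc Hc]]. destruct (Hv d) as [Vd [wd Hdd]].
  assert (Nwa : ~ V wa) by (apply (sides V g Hg HVcomp HCcomp a _ _ Ha); auto).
  assert (Nwb : ~ V wb) by (apply (sides V g Hg HVcomp HCcomp b _ _ Hb); auto).
  destruct (HCconn wb wa Nwb Nwa) as [K HK].
  destruct (walk_inv (fun a b => adj a b /\ ~ V b) adj (fun x => ~ V x)) with (x := wb) (l := K) (y := wa) as [WK IK];
    [intros x y Hx [H1 H2]; auto|auto|auto|].
  destruct (walk_inv (adjV V) adj V) with (x := v a) (l := P) (y := v b) as [WP' IP];
    [intros x y Hx (H1 & H2 & H3); auto|auto|auto|].
  destruct (walk_inv (adjV V) adjE V) with (x := v c) (l := Q) (y := v d) as [WQ' IQ];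
    [intros x y Hx (H1 & H2 & H3); unfold adjE; auto|auto|auto|].
  assert (WC : walk adj (v a) (P ++ (wb :: K) ++ (v a :: nil)) (v a)).
  { apply walk_app with (v b); auto. simpl. split; [destruct Hb as (_ & Hb' & _); auto|].
    apply walk_app with wa; auto. simpl; split; auto.
    destruct Ha as (_ & Ha' & _); unfold adj in *; lia. }
  set (h := fun z => g (- z)).
  set (n := Z.to_nat (d - c)).
  assert (Wg : walk adj (g d) (fpath h (- d) n) (g c)).
  { replace (g d) with (h (- d)) by (unfold h; f_equal; lia).
    replace (g c) with (h (- d + Z.of_nat n)) by (unfold h, n; f_equal; lia).
    apply fpath_walk. intro k. unfold h. destruct Hg as [Hadj _].
    specialize (Hadj (- (k + 1))). replace (- (k + 1) + 1) with (- k) in Hadj by lia.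
    unfold adj in *; lia. }
  destruct (corner _ _ _ _ Hdd) as [Cd1 Cd2]. destruct (corner _ _ _ _ Hc) as [Cc1 Cc2].
  destruct (link_ok (v d) (g d) Cd1 Cd2) as (L1 & _ & HL1).
  destruct (link_ok (v c) (g c) Cc1 Cc2) as (_ & L2 & HL2).
  assert (WD : walk adjE (v c) (Q ++ link (v d) (g d) ++ fpath h (- d) n ++ link (g c) (v c)) (v c)).
  { apply walk_app with (v d); auto. apply walk_app with (g d); auto.
    apply walk_app with (g c); auto. apply (walk_mono adj); auto. unfold adjE; auto. }
  pose proof (parity _ _ _ _ WC WD) as Hpar.
  rewrite (steps_app adjE _ _ (v d) _ WQ'), (steps_app adjE _ _ (g d) _ L1),
    (steps_app adj _ _ (g c) _ Wg) in Hpar.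
  rewrite (steps_app adj _ _ (v b) _ WP') in Hpar.
  cbn [steps] in Hpar.
  rewrite <- app_comm_cons in Hpar. cbn [steps] in Hpar.
  rewrite (steps_app adj _ _ wa _ WK) in Hpar. cbn [steps] in Hpar.
  change ((v b, wb) :: steps wb K ++ (wa, v a) :: nil) with
    (((v b, wb) :: nil) ++ steps wb K ++ ((wa, v a) :: nil)) in Hpar.
  rewrite !cnt_appD, !cnt_appC in Hpar.
  assert (HCv : forall s, In s (steps (v a) P ++ ((v b, wb) :: nil) ++ steps wb K ++ ((wa, v a) :: nil)) ->
     (In (fst s) (v a :: P) \/ ~ V (fst s)) /\ (In (snd s) (v a :: P) \/ ~ V (snd s))).
  { intros s Hs. apply in_app_or in Hs. destruct Hs as [Hs|Hs].
    - apply steps_in in Hs; tauto.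
    - apply in_app_or in Hs. destruct Hs as [Hs|Hs].
      + destruct Hs as [<-|[]]; simpl. split; auto. left.
        apply (walk_last _ _ _ _ WP).
      + apply in_app_or in Hs. destruct Hs as [Hs|Hs].
        * apply steps_in in Hs. destruct Hs as [H1 H2]. split; right; apply IK; auto.
        * destruct Hs as [<-|[]]; simpl; split; auto. }
  assert (Zq : forall D0, (forall s a0 b0, In s D0 -> bisects (fst s) (snd s) a0 b0 ->
       In a0 (v c :: Q) \/ In b0 (v c :: Q)) ->
     forall C0, (forall s, In s C0 -> (In (fst s) (v a :: P) \/ ~ V (fst s)) /\
        (In (snd s) (v a :: P) \/ ~ V (snd s))) -> cnt D0 C0 = 0).
  { intros D0 HD0 C0 HC0. apply cnt_zero. intros s t Hs Ht Hbis.
    destruct (HC0 t Ht) as [T1 T2].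
    destruct (HD0 s _ _ Hs Hbis) as [Hq|Hq].
    - destruct T1 as [T1|T1]; [apply (Hd _ T1 Hq)|apply T1; apply IQ; auto].
    - destruct T2 as [T2|T2]; [apply (Hd _ T2 Hq)|apply T2; apply IQ; auto]. }
  assert (HCsub : forall C0, incl C0 (steps (v a) P ++ ((v b, wb) :: nil) ++ steps wb K ++ ((wa, v a) :: nil)) ->
     forall s, In s C0 -> (In (fst s) (v a :: P) \/ ~ V (fst s)) /\
        (In (snd s) (v a :: P) \/ ~ V (snd s))) by (intros C0 Hi s Hs; apply HCv, Hi, Hs).
  assert (HQ : forall s a0 b0, In s (steps (v c) Q) -> bisects (fst s) (snd s) a0 b0 ->
       In a0 (v c :: Q) \/ In b0 (v c :: Q)).
  { intros s a0 b0 Hs Hbis. apply steps_in in Hs.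
    destruct (bis_endpoint _ _ _ _ Hbis) as [E|[E|[E|E]]]; rewrite E; tauto. }
  assert (HL1' : forall s a0 b0, In s (steps (v d) (link (v d) (g d))) -> bisects (fst s) (snd s) a0 b0 ->
       In a0 (v c :: Q) \/ In b0 (v c :: Q)).
  { intros s a0 b0 Hs Hbis. assert (Hl := walk_last _ _ _ _ WQ).
    destruct (HL1 s a0 b0) as [E|E]; auto; [apply in_or_app; auto| |]; subst; auto. }
  assert (HL2' : forall s a0 b0, In s (steps (g c) (link (g c) (v c))) -> bisects (fst s) (snd s) a0 b0 ->
       In a0 (v c :: Q) \/ In b0 (v c :: Q)).
  { intros s a0 b0 Hs Hbis.
    destruct (HL2 s a0 b0) as [E|E]; auto; [apply in_or_app; auto| |]; subst; simpl; auto. }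
  assert (Hgs : forall s, In s (steps (h (- d)) (fpath h (- d) n)) ->
     exists i, bisects (fst s) (snd s) = bisects (g (i + 1)) (g i) /\ - d <= - (i + 1) < - d + Z.of_nat n).
  { intros s Hs. destruct (fpath_steps _ _ _ _ Hs) as (k & Hk & ->). exists (- k - 1).
    simpl. unfold h. split; [|lia]. f_equal; f_equal; lia. }
  assert (Hgd : h (- d) = g d) by (unfold h; f_equal; lia).
  rewrite <- Hgd in Hpar.
  assert (G1 : cnt (steps (h (- d)) (fpath h (- d) n)) (steps (v a) P) = 0).
  { apply cnt_zero. intros s t Hs Ht Hbis. destruct (Hgs s Hs) as (i & Ei & _).
    rewrite Ei in Hbis. apply bis_sym1 in Hbis. apply steps_in in Ht. destruct Ht as [T1 T2].
    destruct (sides V g Hg HVcomp HCcomp i _ _ Hbis) as [S1 _]. apply S1; apply IP; auto. }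
  assert (G2 : cnt (steps (h (- d)) (fpath h (- d) n)) (steps wb K) = 0).
  { apply cnt_zero. intros s t Hs Ht Hbis. destruct (Hgs s Hs) as (i & Ei & _).
    rewrite Ei in Hbis. apply bis_sym1 in Hbis. apply steps_in in Ht. destruct Ht as [T1 T2].
    destruct (sides V g Hg HVcomp HCcomp i _ _ Hbis) as [_ S2]. apply (IK (snd t)); auto.
    }
  assert (Hcnt : forall e i0, (forall i, bisects (g i) (g (i + 1)) (fst e) (snd e) <-> i = i0) ->
     cnt (steps (h (- d)) (fpath h (- d) n)) (e :: nil) =
     if (- d <=? - i0 - 1) && (- i0 - 1 <? - d + Z.of_nat n) then 1 else 0).
  { intros e i0 He. rewrite cnt_single. apply fpath_count. intro k. unfold h.
    replace (- (k + 1)) with (- k - 1) by lia. split; intro H.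
    - apply bis_sym1 in H. assert (H' : bisects (g (- k - 1)) (g (- k - 1 + 1)) (fst e) (snd e))
        by (replace (- k - 1 + 1) with (- k) by lia; exact H).
      apply He in H'. lia.
    - assert (H' : - k - 1 = i0) by lia. apply He in H'.
      replace (- k - 1 + 1) with (- k) in H' by lia. apply bis_sym1; exact H'. }
  rewrite (Hcnt (v b, wb) b) in Hpar.
  2:{ intro i; simpl; split; [intro Hi; apply (bis_inj g Hg i b _ _ Hi Hb)|intros ->; auto]. }
  rewrite (Hcnt (wa, v a) a) in Hpar.
  2:{ intro i; simpl; split; [intro Hi; apply bis_sym2 in Hi; apply (bis_inj g Hg i a _ _ Hi Ha)
        |intros ->; apply bis_sym2; auto]. }
  rewrite G1, G2 in Hpar.
  rewrite Hgd in Hpar.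
  rewrite !(Zq _ HQ), !(Zq _ HL1'), !(Zq _ HL2') in Hpar;
    try (apply HCsub; intros s Hs; repeat (apply in_or_app; auto; right); auto; fail).
  unfold n in Hpar.
  destruct (Z.leb_spec (- d) (- b - 1)), (Z.ltb_spec (- b - 1) (- d + Z.of_nat (Z.to_nat (d - c)))),
    (Z.leb_spec (- d) (- a - 1)), (Z.ltb_spec (- a - 1) (- d + Z.of_nat (Z.to_nat (d - c))));
    simpl in Hpar; try lia; destruct Hpar as [x Hx]; lia.
Qed.

Close Scope bool_scope. Close Scope Z_scope. Open Scope R_scope.

Lemma ptime_nonneg (V : vertex -> Prop) om (Homnn : forall a b, adjV V a b -> 0 <= om a b) x l y :
  walk (adjV V) x l y -> 0 <= ptime om x l.
Proof. revert x; induction l as [|a l IH]; simpl; intros x H; [lra|].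
  destruct H as [Ha H]. specialize (Homnn _ _ Ha). specialize (IH a H). lra. Qed.

Lemma conn_walk (V : vertex -> Prop) (HVconn : lattice_connected V) x y :
  V x -> V y -> exists l, walk (adjV V) x l y.
Proof. intros Hx Hy. destruct (HVconn x y Hx Hy) as [l Hl]. exists l.
  destruct (walk_inv (fun a b => adj a b /\ V b) (adjV V) V) with (x := x) (l := l) (y := y)
    as [W _]; auto. intros a b Ha [H1 H2]; unfold adjV; auto. Qed.

Lemma tau_spec (V : vertex -> Prop) om (Homnn : forall a b, adjV V a b -> 0 <= om a b)
  (HVconn : lattice_connected V) x y : V x -> V y ->
  (forall l, walk (adjV V) x l y -> tau V om x y <= ptime om x l) /\
  (forall eps, 0 < eps -> exists l, walk (adjV V) x l y /\ ptime om x l < tau V om x y + eps).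
Proof. intros Hx Hy. destruct (conn_walk V HVconn x y Hx Hy) as [l0 W0].
  unfold tau.
  set (E := fun t => exists l, V x /\ walk (adjV V) x l y /\ t = ptime om x l).
  destruct (Glb_Rbar_correct E) as [Hlb Hglb].
  destruct (Glb_Rbar E) as [r| |] eqn:EG.
  - simpl. split.
    + intros l Wl. apply (Hlb (ptime om x l)). exists l; auto.
    + intros eps Heps. apply NNPP; intro Hn.
      assert (Hl : is_lb_Rbar E (r + eps)).
      { intros t (l & _ & Wl & ->). simpl. apply Rnot_lt_le; intro Hlt. apply Hn; exists l; auto. }
      specialize (Hglb _ Hl). simpl in Hglb. lra.
  - exfalso. specialize (Hlb (ptime om x l0)). simpl in Hlb. apply Hlb. exists l0; auto.
  - exfalso. assert (Hl : is_lb_Rbar E 0).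
    { intros t (l & _ & Wl & ->). simpl. apply (ptime_nonneg V om Homnn _ _ _ Wl). }
    specialize (Hglb _ Hl). simpl in Hglb. auto. Qed.

Lemma le_eps a b : (forall eps, 0 < eps -> a <= b + eps) -> a <= b.
Proof. intro H. apply Rnot_lt_le; intro Hlt. specialize (H ((a - b) / 2)). lra. Qed.

Lemma tau_tri (V : vertex -> Prop) om (Homnn : forall a b, adjV V a b -> 0 <= om a b)
  (HVconn : lattice_connected V) x y z : V x -> V y -> V z ->
  tau V om x z <= tau V om x y + tau V om y z.
Proof. intros Hx Hy Hz. apply le_eps; intros eps He.
  destruct (tau_spec V om Homnn HVconn x y Hx Hy) as [_ A1].
  destruct (tau_spec V om Homnn HVconn y z Hy Hz) as [_ A2].
  destruct (tau_spec V om Homnn HVconn x z Hx Hz) as [B3 _].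
  destruct (A1 (eps / 2)) as (l1 & W1 & P1); [lra|].
  destruct (A2 (eps / 2)) as (l2 & W2 & P2); [lra|].
  specialize (B3 (l1 ++ l2) (walk_app _ _ _ _ _ _ W1 W2)).
  rewrite (ptime_app om x l1 y l2 _ W1) in B3. lra. Qed.

Lemma cross_ineq (V : vertex -> Prop) om (Homnn : forall a b, adjV V a b -> 0 <= om a b)
  (HVconn : lattice_connected V) z p0 p q pi eta w :
  V z -> V p0 -> V p -> V q ->
  walk (adjV V) z pi p -> walk (adjV V) p0 eta q -> In w (z :: pi) -> In w (p0 :: eta) ->
  tau V om z q + tau V om p0 p <= ptime om z pi + ptime om p0 eta.
Proof. intros Vz V0 Vp Vq Wpi Weta I1 I2.
  destruct (walk_split _ _ _ _ _ I1 Wpi) as (a1 & a2 & -> & Wa1 & Wa2).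
  destruct (walk_split _ _ _ _ _ I2 Weta) as (b1 & b2 & -> & Wb1 & Wb2).
  destruct (tau_spec V om Homnn HVconn z q Vz Vq) as [T1 _].
  destruct (tau_spec V om Homnn HVconn p0 p V0 Vp) as [T2 _].
  specialize (T1 _ (walk_app _ _ _ _ _ _ Wa1 Wb2)).
  specialize (T2 _ (walk_app _ _ _ _ _ _ Wb1 Wa2)).
  rewrite (ptime_app om _ _ _ _ _ Wa1) in T1.
  rewrite (ptime_app om _ _ _ _ _ Wb1) in T2.
  rewrite (ptime_app om _ _ _ _ _ Wa1).
  rewrite (ptime_app om _ _ _ _ _ Wb1). lra. Qed.

Lemma adjV_sym (V : vertex -> Prop) a b : adjV V a b -> adjV V b a.
Proof. unfold adjV, adj; intros (H1 & H2 & H3); repeat split; auto; lia. Qed.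

Open Scope R_scope.

Lemma dichot (V : vertex -> Prop) g (Hg : dual_path g)
  (HVcomp : is_component (cut_adj g) V)
  (HCcomp : is_component (cut_adj g) (fun x => ~ V x))
  (HCconn : lattice_connected (fun x => ~ V x))
  (v : Z -> vertex)
  (Hv : forall i, V (v i) /\ exists w, bisects (g i) (g (i + 1)%Z) (v i) w)
  z eta N m n' : walk (adjV V) (v 0%Z) eta (v N) -> (0 < m < N)%Z -> (N < n')%Z ->
  (forall pi, walk (adjV V) z pi (v m) -> exists w, In w (z :: pi) /\ In w (v 0%Z :: eta)) \/
  (forall pi, walk (adjV V) z pi (v n') -> exists w, In w (z :: pi) /\ In w (v 0%Z :: eta)).
Proof. intros Weta H1 H2.
  destruct (classic (forall pi, walk (adjV V) z pi (v m) -> exists w, In w (z :: pi) /\ In w (v 0%Z :: eta)))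
    as [H|H]; [left; auto|right].
  intros pi2 W2. apply NNPP; intro Hn2. apply H; intros pi1 W1. apply NNPP; intro Hn1.
  destruct (walk_rev _ (adjV_sym V) _ _ _ W1) as (l' & Wl' & Il').
  destruct (crossing_L V g Hg HVcomp HCcomp HCconn v Hv 0%Z N m n' eta (l' ++ pi2))
    as (w & Iw1 & Iw2); try lia; auto.
  { apply walk_app with z; auto. }
  assert (Hw : In w (v m :: l') \/ In w pi2).
  { simpl in Iw2. destruct Iw2 as [<-|Iw2]; [left; simpl; auto|].
    apply in_app_or in Iw2. destruct Iw2; [left; simpl; auto|right; auto]. }
  destruct Hw as [Hw|Hw].
  - apply Hn1. exists w; split; auto.
  - apply Hn2. exists w; split; auto. simpl; auto. Qed.

Definition Pa (h : nat -> R) n := forall m, (0 < m < n)%nat -> h n <= h m.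
Definition Pb (h : nat -> R) n := forall n', (n < n')%nat -> h n <= h n'.

Lemma PaPb (V : vertex -> Prop) g (Hg : dual_path g)
  (HVconn : lattice_connected V)
  (HVcomp : is_component (cut_adj g) V)
  (HCcomp : is_component (cut_adj g) (fun x => ~ V x))
  (HCconn : lattice_connected (fun x => ~ V x))
  (v : Z -> vertex)
  (Hv : forall i, V (v i) /\ exists w, bisects (g i) (g (i + 1)%Z) (v i) w)
  om (Homnn : forall a b, adjV V a b -> 0 <= om a b) z (Vz : V z) n :
  (1 <= n)%nat ->
  Pa (fun n => tau V om z (v (Z.of_nat n)) - tau V om (v 0%Z) (v (Z.of_nat n))) n \/
  Pb (fun n => tau V om z (v (Z.of_nat n)) - tau V om (v 0%Z) (v (Z.of_nat n))) n.
Proof. intro Hn. set (h := fun n => tau V om z (v (Z.of_nat n)) - tau V om (v 0%Z) (v (Z.of_nat n))).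
  apply NNPP; intro Hno. apply not_or_and in Hno. destruct Hno as [Na Nb].
  unfold Pa in Na. apply not_all_ex_not in Na. destruct Na as [m Na].
  apply imply_to_and in Na. destruct Na as [Hm Na]. apply Rnot_le_lt in Na.
  unfold Pb in Nb. apply not_all_ex_not in Nb. destruct Nb as [n' Nb].
  apply imply_to_and in Nb. destruct Nb as [Hn' Nb]. apply Rnot_le_lt in Nb.
  fold h in Na, Nb.
  set (eps := Rmin (h n - h m) (h n - h n') / 3).
  assert (Heps : 0 < eps) by (unfold eps; apply Rmin_case; lra).
  assert (E1 : eps <= (h n - h m) / 3) by (unfold eps; pose proof (Rmin_l (h n - h m) (h n - h n')); lra).
  assert (E2 : eps <= (h n - h n') / 3) by (unfold eps; pose proof (Rmin_r (h n - h m) (h n - h n')); lra).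
  pose proof (proj1 (Hv 0%Z)) as V0.
  destruct (tau_spec V om Homnn HVconn (v 0%Z) (v (Z.of_nat n)) V0 (proj1 (Hv _))) as [_ A0].
  destruct (A0 eps Heps) as (eta & Weta & Peta).
  destruct (dichot V g Hg HVcomp HCcomp HCconn v Hv z eta (Z.of_nat n) (Z.of_nat m) (Z.of_nat n') Weta)
    as [D|D]; try lia.
  - destruct (tau_spec V om Homnn HVconn z (v (Z.of_nat m)) Vz (proj1 (Hv _))) as [_ A1].
    destruct (A1 eps Heps) as (pi & Wpi & Ppi).
    destruct (D pi Wpi) as (w & I1 & I2).
    pose proof (cross_ineq V om Homnn HVconn z (v 0%Z) _ _ pi eta w Vz V0 (proj1 (Hv _)) (proj1 (Hv _))
      Wpi Weta I1 I2).
    unfold h in *. lra.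
  - destruct (tau_spec V om Homnn HVconn z (v (Z.of_nat n')) Vz (proj1 (Hv _))) as [_ A1].
    destruct (A1 eps Heps) as (pi & Wpi & Ppi).
    destruct (D pi Wpi) as (w & I1 & I2).
    pose proof (cross_ineq V om Homnn HVconn z (v 0%Z) _ _ pi eta w Vz V0 (proj1 (Hv _)) (proj1 (Hv _))
      Wpi Weta I1 I2).
    unfold h in *. lra. Qed.

Lemma mono_conv (u : nat -> R) N M : (forall n, (N <= n)%nat -> u n <= u (S n)) ->
  (forall n, u n <= M) -> exists B : R, is_lim_seq u B.
Proof. intros Hm Hb.
  set (w := fun k => u (k + N)%nat).
  assert (Gw : Un_growing w).
  { intro k; unfold w. replace (S k + N)%nat with (S (k + N)) by lia. apply Hm; lia. }
  assert (Bw : has_ub w).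
  { exists M. intros x [k ->]. apply Hb. }
  destruct (growing_cv w Gw Bw) as [l Hl].
  exists l. apply (is_lim_seq_incr_n u N l). apply is_lim_seq_Reals. exact Hl. Qed.

Lemma conv (h : nat -> R) M (Hb : forall n, Rabs (h n) <= M)
  (Hd : forall n, (1 <= n)%nat -> Pa h n \/ Pb h n) : exists B : R, is_lim_seq h B.
Proof.
  destruct (classic (exists N, forall n, (N <= n)%nat -> Pb h n)) as [[N HN]|HN].
  - apply (mono_conv h N M).
    + intros n Hn. apply (HN n Hn). lia.
    + intro n. specialize (Hb n). apply Rabs_le_between in Hb. lra.
  - assert (Inf : forall N, exists n, (N <= n)%nat /\ ~ Pb h n).
    { intro N. apply NNPP; intro H. apply HN. exists N. intros n Hn. apply NNPP; intro H'.
      apply H. exists n; auto. }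
    destruct (classic (exists n0, (1 <= n0)%nat /\ Pb h n0)) as [[n0 [Hn0 Pn0]]|H0].
    + exists (h n0). apply (is_lim_seq_incr_n h (S n0)).
      apply is_lim_seq_ext with (fun _ => h n0); [|apply is_lim_seq_const].
      intro k. set (n := (k + S n0)%nat).
      assert (Hlt : (n0 < n)%nat) by (unfold n; lia).
      apply Rle_antisym.
      * apply Pn0; auto.
      * destruct (Hd n ltac:(lia)) as [Pan|Pbn].
        -- apply Pan; lia.
        -- destruct (Inf (S n)) as (k' & Hk' & Nk').
           destruct (Hd k' ltac:(lia)) as [Pak|Pbk]; [|contradiction].
           apply Rle_trans with (h k'); [apply Pbn; lia|apply Pak; lia].
    + assert (HA : forall n, (1 <= n)%nat -> Pa h n).
      { intros n Hn. destruct (Hd n Hn); auto. exfalso; apply H0; exists n; auto. }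
      destruct (mono_conv (fun n => - h n) 1 M) as [B HB].
      * intros n Hn. assert (h (S n) <= h n) by (apply HA; lia). lra.
      * intro n. specialize (Hb n). apply Rabs_le_between in Hb. lra.
      * exists (- B). apply is_lim_seq_opp in HB. simpl in HB.
        apply is_lim_seq_ext with (fun n => - - h n); [intro; ring|]. exact HB. Qed.

Open Scope R_scope.

Lemma tau_nonneg (V : vertex -> Prop) om (Homnn : forall a b, adjV V a b -> 0 <= om a b)
  (HVconn : lattice_connected V) x y : V x -> V y -> 0 <= tau V om x y.
Proof. intros Hx Hy. apply Rnot_lt_le; intro Hlt.
  destruct (tau_spec V om Homnn HVconn x y Hx Hy) as [_ A1].
  destruct (A1 (- tau V om x y)) as (l & W & P); [lra|].
  pose proof (ptime_nonneg V om Homnn _ _ _ W). lra. Qed.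

Lemma h_conv (V : vertex -> Prop) g (Hg : dual_path g)
  (HVconn : lattice_connected V)
  (HVcomp : is_component (cut_adj g) V)
  (HCcomp : is_component (cut_adj g) (fun x => ~ V x))
  (HCconn : lattice_connected (fun x => ~ V x))
  (v : Z -> vertex)
  (Hv : forall i, V (v i) /\ exists w, bisects (g i) (g (i + 1)%Z) (v i) w)
  om (Homnn : forall a b, adjV V a b -> 0 <= om a b) z (Vz : V z) :
  exists B : R, is_lim_seq (fun n => tau V om z (v (Z.of_nat n)) - tau V om (v 0%Z) (v (Z.of_nat n))) B.
Proof. pose proof (proj1 (Hv 0%Z)) as V0.
  apply (conv _ (tau V om z (v 0%Z) + tau V om (v 0%Z) z)).
  - intro n. pose proof (proj1 (Hv (Z.of_nat n))) as Vn.
    pose proof (tau_tri V om Homnn HVconn z (v 0%Z) (v (Z.of_nat n)) Vz V0 Vn).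
    pose proof (tau_tri V om Homnn HVconn (v 0%Z) z (v (Z.of_nat n)) V0 Vz Vn).
    pose proof (tau_nonneg V om Homnn HVconn z (v 0%Z) Vz V0).
    pose proof (tau_nonneg V om Homnn HVconn (v 0%Z) z V0 Vz).
    apply Rabs_le; lra.
  - intros n Hn. apply (PaPb V g Hg HVconn HVcomp HCcomp HCconn v Hv om Homnn z Vz n Hn). Qed.

Theorem theorem1p1
  (V : vertex -> Prop)
  (HVinf : infinite_set V) (HVconn : lattice_connected V)
  (HCinf : infinite_set (fun x => ~ V x))
  (HCconn : lattice_connected (fun x => ~ V x))
  (g : Z -> vertex) (Hg : dual_path g)
  (HVcomp : is_component (cut_adj g) V)
  (HCcomp : is_component (cut_adj g) (fun x => ~ V x))
  (v : Z -> vertex)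
  (Hv : forall i, V (v i) /\ exists w, bisects (g i) (g (i + 1)%Z) (v i) w)
  (om : vertex -> vertex -> R)
  (Homsym : forall a b, om a b = om b a)
  (Homnn : forall a b, adjV V a b -> 0 <= om a b)
  (x y : vertex) (Hx : V x) (Hy : V y) :
  exists B : R,
    is_lim_seq (fun n : nat => tau V om x (v (Z.of_nat n)) - tau V om y (v (Z.of_nat n))) B.
Proof.
  destruct (h_conv V g Hg HVconn HVcomp HCcomp HCconn v Hv om Homnn x Hx) as [B1 H1].
  destruct (h_conv V g Hg HVconn HVcomp HCcomp HCconn v Hv om Homnn y Hy) as [B2 H2].
  exists (B1 - B2).
  apply is_lim_seq_ext with
    (fun n => (tau V om x (v (Z.of_nat n)) - tau V om (v 0%Z) (v (Z.of_nat n))) -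
              (tau V om y (v (Z.of_nat n)) - tau V om (v 0%Z) (v (Z.of_nat n)))).
  - intro n; ring.
  - apply is_lim_seq_minus'; auto. Qed.
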